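(* Assume the input embeddings $e_1,\dots,e_N$ are orthonormal, the output embeddings $u_1,\dots,u_M$ are orthonormal, and $p(x)>0$ for all $x\in[N]$. Let $\Pi$ denote the orthogonal projection of $\mathbb{R}^d$ onto $\mathrm{span}\{u_i-u_j: i,j\in[M]\}$. Then for any initialization $W_0$, the gradient flow $\dot W_t=-\nabla\mathcal{L}(W_t)$ satisfies \[ \lim_{t\to\infty}\frac{W_t}{\log t}=\kappa\sum_{x\in[N]}\Pi(u_{f^*(x)})\otimes e_x \] for some constant $\kappa>0$.
   Context: Integers $N,M\ge2$, $d\ge\max(N,M)$. Fixed embeddings $e_1,\dots,e_N,u_1,\dots,u_M\in\mathbb{R}^d$, target $f^*:[N]\to[M]$, probability distribution $p$ on $[N]$. For $W\in\mathbb{R}^{d\times d}$: $p_W(y\mid x)=\exp(u_y^\top We_x)/\sum_{z\in[M]}\exp(u_z^\top We_x)$, $\mathcal{L}(W)=-\sum_x p(x)\log p_W(f^*(x)\mid x)$. Gradients are for the Frobenius inner product; $u\otimes e:=ue^\top$. *)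

(* Defs.v *)
From HB Require Import structures.
From mathcomp Require Import all_boot all_order all_algebra.
From mathcomp Require Import all_classical all_reals all_analysis.
Set Implicit Arguments. Unset Strict Implicit. Unset Printing Implicit Defensive.
Import Order.TTheory GRing.Theory Num.Theory.
Import numFieldNormedType.Exports.
Local Open Scope classical_set_scope.
Local Open Scope ring_scope.

Section Defs.
Variable R : realType.

Definition dotv {d : nat} (v w : 'cV[R]_d) : R := \sum_(k < d) v k 0 * w k 0.

Definition frob {d : nat} (A B : 'M[R]_d) : R := \sum_(i < d) \sum_(j < d) A i j * B i j.

Definition tensor {d : nat} (u e : 'cV[R]_d) : 'M[R]_d := u *m e^T.

Definition orthonormal_vecs {n d : nat} (v : 'I_n -> 'cV[R]_d) : Prop :=
  forall i j, dotv (v i) (v j) = (i == j)%:R.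

Definition pW {N M d : nat} (e : 'I_N -> 'cV[R]_d) (u : 'I_M -> 'cV[R]_d)
  (W : 'M[R]_d) (y : 'I_M) (x : 'I_N) : R :=
  expR (dotv (u y) (W *m e x)) / \sum_(z < M) expR (dotv (u z) (W *m e x)).

Definition loss {N M d : nat} (e : 'I_N -> 'cV[R]_d) (u : 'I_M -> 'cV[R]_d)
  (fstar : 'I_N -> 'I_M) (p : 'I_N -> R) (W : 'M[R]_d) : R :=
  - \sum_(x < N) p x * ln (pW e u W (fstar x) x).

Definition is_gradient {d : nat} (f : 'M[R]_d -> R) (W G : 'M[R]_d) : Prop :=
  differentiable f W /\ forall V : 'M[R]_d, 'd f W V = frob G V.

Definition in_diff_span {M d : nat} (u : 'I_M -> 'cV[R]_d) (v : 'cV[R]_d) : Prop :=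
  exists c : 'I_M -> 'I_M -> R, v = \sum_(i < M) \sum_(j < M) c i j *: (u i - u j).

Definition is_orth_proj_diff_span {M d : nat} (u : 'I_M -> 'cV[R]_d)
  (Pi : 'cV[R]_d -> 'cV[R]_d) : Prop :=
  forall v, in_diff_span u (Pi v) /\
            forall w, in_diff_span u w -> dotv (v - Pi v) w = 0.

Definition is_gradient_flow {d : nat} (f : 'M[R]_d -> R) (W0 : 'M[R]_d)
  (W : R -> 'M[R]_d) : Prop :=
  W 0 = W0 /\ W x @[x --> 0^'+] --> W0 /\
  forall t : R, 0 < t -> exists G, is_gradient f (W t) G /\ is_derive t 1 W (- G).

End Defs.

(* Main.v *)
Require Import Defs.
From HB Require Import structures.
From mathcomp Require Import all_boot all_order all_algebra.
From mathcomp Require Import all_classical all_reals all_analysis.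
From mathcomp Require Import ring lra.
Import Order.TTheory GRing.Theory Num.Theory.
Import numFieldNormedType.Exports.
Local Open Scope classical_set_scope.
Local Open Scope ring_scope.

Section Helpers.
Context {R : realType}.

Lemma dD (f g : R -> R) (x a b : R) : is_derive x 1 f a -> is_derive x 1 g b ->
  is_derive x 1 (fun t => f t + g t) (a + b).
Proof. move=> ha hb; exact: is_deriveD. Qed.

Lemma dB (f g : R -> R) (x a b : R) : is_derive x 1 f a -> is_derive x 1 g b ->
  is_derive x 1 (fun t => f t - g t) (a - b).
Proof. move=> ha hb; exact: is_deriveB. Qed.

Lemma dN (f : R -> R) (x a : R) : is_derive x 1 f a ->
  is_derive x 1 (fun t => - f t) (- a).
Proof. move=> ha; exact: is_deriveN. Qed.

Lemma dMc (f : R -> R) (x a c : R) : is_derive x 1 f a ->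
  is_derive x 1 (fun t => c * f t) (c * a).
Proof. move=> ha; have := is_deriveZ c ha; by []. Qed.

Lemma dM (f g : R -> R) (x a b : R) : is_derive x 1 f a -> is_derive x 1 g b ->
  is_derive x 1 (fun t => f t * g t) (f x *: b + g x *: a).
Proof. move=> ha hb; exact: is_deriveM. Qed.

Lemma dC (c x : R) : is_derive x 1 (fun _ : R => c) 0.
Proof. exact: is_derive_cst. Qed.

Lemma dsum n (h : 'I_n -> R -> R) (x : R) (dh : 'I_n -> R) :
  (forall i, is_derive x 1 (h i) (dh i)) ->
  is_derive x 1 (fun t => \sum_(i < n) h i t) (\sum_(i < n) dh i).
Proof.
elim: n h dh => [|n IH] h dh H.
  under [fun t => _]funext do rewrite big_ord0; rewrite big_ord0; exact: dC.
under [fun t => _]funext do rewrite big_ord_recr; rewrite big_ord_recr /=.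
apply: (@dD (fun t => \sum_(i < n) h (widen_ord (leqnSn n) i) t) (h ord_max)).
  exact: (IH (fun i => h (widen_ord (leqnSn n) i))).
all: try exact: H.
Qed.

Lemma dexp (f : R -> R) (x a : R) : is_derive x 1 f a ->
  is_derive x 1 (fun t => expR (f t)) (expR (f x) * a).
Proof. move=> ha; exact: (@is_derive1_comp _ expR f). Qed.

Lemma dln (f : R -> R) (x a : R) : 0 < f x -> is_derive x 1 f a ->
  is_derive x 1 (fun t => ln (f t)) ((f x)^-1 * a).
Proof. move=> hp ha; have := is_derive1_ln hp; move=> hl;
  exact: (@is_derive1_comp _ (@ln R) f x _ _ hl ha). Qed.

Lemma dlin (x c : R) : is_derive x 1 (fun t : R => c * t) c.
Proof. have := @dMc id x 1 c (is_derive_id x 1); by rewrite mulr1. Qed.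

Lemma dlinr (x c : R) : is_derive x 1 (fun t : R => t * c) c.
Proof. have := @dlin x c; under [fun t => _]funext do rewrite mulrC; by []. Qed.

Lemma deq (f : R -> R) (x a b : R) : is_derive x 1 f a -> a = b -> is_derive x 1 f b.
Proof. by move=> h <-. Qed.

Lemma mono_deriv (h dh : R -> R) :
  (forall t : R, 0 < t -> is_derive t 1 h (dh t)) ->
  (forall t : R, 0 < t -> 0 <= dh t) ->
  forall s t : R, 0 < s -> s <= t -> h s <= h t.
Proof.
move=> Hd Hp s t s0 st.
apply: (@ger0_derive1_ndecr _ h s t) => //.
- move=> x; rewrite in_itv /= => /andP[sx _].
  by case: (Hd x (lt_trans s0 sx)).
- move=> x; rewrite in_itv /= => /andP[sx _].
  rewrite derive1E; have [_ ->] := Hd x (lt_trans s0 sx); exact: Hp (lt_trans s0 sx).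
- apply: continuous_in_subspaceT => x; rewrite inE /= in_itv /= => /andP[sx _].
  have [dx _] := Hd x (lt_le_trans s0 sx).
  exact/differentiable_continuous/derivable1_diffP.
Qed.

Lemma cst_deriv (h : R -> R) :
  (forall t : R, 0 < t -> is_derive t 1 h 0) ->
  forall t : R, 0 < t -> h t = h 1.
Proof.
move=> Hd t t0.
have H1 := @mono_deriv h (fun _ => 0) Hd (fun _ _ => lexx 0).
have H2 := @mono_deriv (fun t => - h t) (fun _ => - 0) (fun t ht => @dN h t 0 (Hd t ht))
  (fun _ _ => ltac:(by rewrite oppr0)).
case: (leP t 1) => ht; apply/eqP; rewrite eq_le.
- rewrite (H1 t 1 t0 ht) /= -lerN2; exact: (H2 t 1 t0 ht).
- rewrite (H1 1 t ltr01 (ltW ht)) andbT -lerN2; exact: (H2 1 t ltr01 (ltW ht)).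
Qed.

Lemma mono_deriv2 (h dh : R -> R) (t0 : R) : 0 < t0 ->
  (forall t : R, 0 < t -> is_derive t 1 h (dh t)) ->
  (forall t : R, t0 <= t -> 0 <= dh t) ->
  forall s t : R, t0 <= s -> s <= t -> h s <= h t.
Proof.
move=> t00 Hd Hp s t s0 st.
have s00 : 0 < s by exact: lt_le_trans t00 s0.
apply: (@ger0_derive1_ndecr _ h s t) => //.
- move=> x; rewrite in_itv /= => /andP[sx _].
  by case: (Hd x (lt_trans s00 sx)).
- move=> x; rewrite in_itv /= => /andP[sx _].
  rewrite derive1E; have [_ ->] := Hd x (lt_trans s00 sx).
  exact: Hp (le_trans s0 (ltW sx)).
- apply: continuous_in_subspaceT => x; rewrite inE /= in_itv /= => /andP[sx _].
  have [dx _] := Hd x (lt_le_trans s00 sx).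
  exact/differentiable_continuous/derivable1_diffP.
Qed.

End Helpers.
Arguments dD {R f g x a b}.
Arguments dB {R f g x a b}.
Arguments dN {R f x a}.
Arguments dMc {R f x a} c.
Arguments dM {R f g x a b}.
Arguments dsum {R n h x dh}.
Arguments dexp {R f x a}.
Arguments dln {R f x a}.
Arguments deq {R f x a} b.

Section Core.
Variables (R : realType) (M : nat) (a : R) (f : 'I_M) (z : 'I_M -> R -> R).
Hypothesis ha : 0 < a.
Let S (t : R) := \sum_(k < M) expR (z k t).
Let s (y : 'I_M) (t : R) := expR (z y t) / S t.
Hypothesis hz : forall t : R, 0 < t -> forall y,
  is_derive t 1 (z y) (a * ((y == f)%:R - expR (z y t) / \sum_(k < M) expR (z k t))).

Lemma Sdecomp t : S t = expR (z f t) + \sum_(k < M | k != f) expR (z k t).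
Proof. by rewrite /S (bigD1 f). Qed.

Lemma T_ge0 t : 0 <= \sum_(k < M | k != f) expR (z k t).
Proof. by apply: sumr_ge0 => k _; exact: expR_ge0. Qed.

Lemma S_gt0 t : 0 < S t.
Proof. rewrite Sdecomp; apply: (lt_le_trans (expR_gt0 (z f t))); rewrite lerDl; exact: T_ge0. Qed.

Lemma sum_s t : \sum_(y < M) s y t = 1.
Proof. by rewrite /s -mulr_suml divff // gt_eqF // S_gt0. Qed.

Lemma sum_delta (F : 'I_M -> R) : \sum_(y < M) (y == f)%:R * F y = F f.
Proof.
rewrite (bigD1 f) //= eqxx mul1r big1 ?addr0 // => y /negbTE ->; exact: mul0r.
Qed.

Definition K := \sum_(y < M) z y 1.

Lemma sumz_cst t : 0 < t -> \sum_(y < M) z y t = K.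
Proof.
move=> t0; apply: (@cst_deriv _ (fun t => \sum_(y < M) z y t)) => // u u0.
apply: deq; first by apply: dsum => y; exact: hz.
rewrite -mulr_sumr sumrB.
have -> : \sum_(i < M) (i == f)%:R = 1 :> R.
  by rewrite -[RHS](sum_delta (fun _ => 1)); apply: eq_bigr => i _; rewrite mulr1.
by have := sum_s u; rewrite /s /S => ->; rewrite subrr mulr0.
Qed.

Lemma sf_le1 t : expR (z f t) / S t <= 1.
Proof.
rewrite ler_pdivrMr ?S_gt0 // mul1r Sdecomp lerDl; exact: T_ge0.
Qed.

Lemma g_mono y : y != f -> forall s0 t : R, 0 < s0 -> s0 <= t ->
  z f s0 - z y s0 <= z f t - z y t.
Proof.
move=> hy; apply: (@mono_deriv _ (fun t => z f t - z y t)
  (fun t => a * ((f == f)%:R - expR (z f t) / S t) - a * ((y == f)%:R - expR (z y t) / S t))).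
  by move=> t t0; apply: dB; exact: hz.
move=> t t0; rewrite eqxx (negbTE hy) sub0r mulrN opprK.
apply: addr_ge0; apply: mulr_ge0; try exact: ltW ha.
  by rewrite /= mulr1n subr_ge0 sf_le1.
by apply: divr_ge0; [exact: expR_ge0 | exact: ltW (S_gt0 t)].
Qed.

Lemma D_bound y y' : y != f -> y' != f -> forall t : R, 1 <= t ->
  z y' t - z y t <= `|z y' 1 - z y 1|.
Proof.
move=> hy hy' t t1.
pose D := fun t => z y' t - z y t.
pose dD := fun t => a * ((y' == f)%:R - expR (z y' t) / S t) - a * ((y == f)%:R - expR (z y t) / S t).
have HD : forall t : R, 0 < t -> is_derive t 1 D (dD t).
  by move=> u u0; apply: dB; exact: hz.
have H := @mono_deriv _ (fun t => - (D t * D t)) (fun t => - (D t *: dD t + D t *: dD t))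
  (fun u u0 => dN (dM (HD u u0) (HD u u0))).
have : - (D 1 * D 1) <= - (D t * D t).
  apply: H => //.
  move=> u u0; rewrite oppr_ge0 -mulr2n mulrn_wle0 //.
  have -> : dD u = (expR (z y u) - expR (z y' u)) * (a / S u).
    by rewrite /dD (negbTE hy) (negbTE hy') /= !mulr0n !sub0r; field; rewrite gt_eqF // S_gt0.
  change ((z y' u - z y u) * ((expR (z y u) - expR (z y' u)) * (a / S u)) <= 0); rewrite mulrA; apply: mulr_le0_ge0; last first.
    by apply: divr_ge0; [exact: ltW ha|apply/ltW/S_gt0].
  case: (leP (z y u) (z y' u)) => h.
    apply: mulr_ge0_le0; first by rewrite subr_ge0.
    by rewrite subr_le0 ler_expR.
  apply: mulr_le0_ge0; first by rewrite subr_le0 ltW.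
  by rewrite subr_ge0 ler_expR ltW.
rewrite lerN2 /D => h.
have hn : `|z y' 1 - z y 1| ^+ 2 = (z y' 1 - z y 1) ^+ 2 by rewrite real_normK // num_real.
have hn0 := normr_ge0 (z y' 1 - z y 1).
move: hn hn0 h; rewrite expr2 expr2.
set A := z y' t - z y t; set B := `|_|; set C := z y' 1 - z y 1 => hn hn0 h.
nra.
Qed.

Definition Q (t : R) := \sum_(k < M | k != f) expR (z k t - z f t).

Lemma S_fact (t : R) : S t = expR (z f t) * (1 + Q t).
Proof.
rewrite Sdecomp /Q mulrDr mulr1 mulr_sumr; congr (_ + _).
by apply: eq_bigr => k _; rewrite expRB mulrCA divff ?mulr1 // gt_eqF // expR_gt0.
Qed.

Lemma Q_ge0 (t : R) : 0 <= Q t.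
Proof. by apply: sumr_ge0 => k _; exact: expR_ge0. Qed.

Lemma sf_eq (t : R) : expR (z f t) / S t = (1 + Q t)^-1.
Proof.
have h1 : 1 + Q t != 0 by rewrite gt_eqF // (lt_le_trans ltr01) // lerDl Q_ge0.
have h2 : expR (z f t) != 0 by rewrite gt_eqF // expR_gt0.
by rewrite S_fact; field; rewrite h1 h2.
Qed.

Lemma sf_mono (t : R) : 1 <= t -> expR (z f 1) / S 1 <= expR (z f t) / S t.
Proof.
move=> t1; rewrite !sf_eq lef_pV2 ?posrE; last first.
- by apply: (lt_le_trans ltr01); rewrite lerDl Q_ge0.
- by apply: (lt_le_trans ltr01); rewrite lerDl Q_ge0.
rewrite lerD2l /Q; apply: ler_sum => k hk; rewrite ler_expR.
have := @g_mono k hk 1 t ltr01 t1; lra.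
Qed.

Definition alpha := a * (expR (z f 1) / S 1).
Definition beta (y : 'I_M) := a * (1 + \sum_(k < M | k != f) expR `|z k 1 - z y 1|).
Definition E (y : 'I_M) (t : R) := expR (z f t - z y t).
Definition dE (y : 'I_M) (t : R) := expR (z f t - z y t) *
  (a * ((f == f)%:R - expR (z f t) / S t) - a * ((y == f)%:R - expR (z y t) / S t)).

Lemma E_der (y : 'I_M) (t : R) : 0 < t -> is_derive t 1 (E y) (dE y t).
Proof. by move=> t0; apply: dexp; apply: dB; exact: hz. Qed.

Lemma alpha_gt0 : 0 < alpha.
Proof. by apply: mulr_gt0 => //; apply: divr_gt0; [exact: expR_gt0|exact: S_gt0]. Qed.

Lemma beta_ge0 y : 0 <= beta y.
Proof.
apply: mulr_ge0; first exact: ltW ha.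
by apply: addr_ge0 => //; apply: sumr_ge0 => k _; exact: expR_ge0.
Qed.

Lemma dE_eq (y : 'I_M) (t : R) : y != f ->
  dE y t = a * (expR (z f t) / S t) * ((\sum_(k < M | k != f) expR (z k t)) / expR (z y t) + 1).
Proof.
move=> hy; rewrite /dE eqxx (negbTE hy) /= mulr1n mulr0n expRB.
have hS := Sdecomp t.
have S0 : S t != 0 by rewrite gt_eqF // S_gt0.
have B0 : expR (z y t) != 0 by rewrite gt_eqF // expR_gt0.
move: S0 hS; set T := \sum_(k < M | _) _; set St := S t => S0 hS.
rewrite hS in S0 *; field.
by rewrite B0 S0.
Qed.

Lemma dE_lb (y : 'I_M) (t : R) : y != f -> 1 <= t -> alpha <= dE y t.
Proof.
move=> hy t1; rewrite dE_eq // /alpha -[X in X <= _]mulr1.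
apply: ler_pM.
- by apply/mulr_ge0; [exact: ltW ha| apply: divr_ge0; [exact: expR_ge0| exact: ltW (S_gt0 1)]].
- exact: ler01.
- by rewrite ler_pM2l // sf_mono.
rewrite lerDr; apply: divr_ge0; [exact: T_ge0|exact: expR_ge0].
Qed.

Lemma dE_ub (y : 'I_M) (t : R) : y != f -> 1 <= t -> dE y t <= beta y.
Proof.
move=> hy t1; rewrite dE_eq // /beta -mulrA ler_pM2l //.
have h1 : 0 <= (\sum_(k < M | k != f) expR (z k t)) / expR (z y t) + 1.
  by apply: addr_ge0 => //; apply: divr_ge0; [exact: T_ge0|exact: expR_ge0].
apply: (le_trans (ler_piMl h1 (sf_le1 t))).
rewrite addrC lerD2l mulr_suml; apply: ler_sum => k hk.
rewrite -expRB ler_expR; exact: D_bound.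
Qed.

Definition Bg (y : 'I_M) := `|ln (Num.min alpha (E y 1))| + `|ln (E y 1 + beta y)|.

Lemma g_bound (y : 'I_M) (t : R) : y != f -> 1 <= t -> `|(z f t - z y t) - ln t| <= Bg y.
Proof.
move=> hy t1.
have t0 : 0 < t by exact: lt_le_trans ltr01 t1.
have H1 := @mono_deriv2 _ (fun t => E y t - alpha * t) (fun t => dE y t - alpha) 1 ltr01
  (fun u u0 => dB (E_der y u u0) (dlin u alpha))
  (fun u u1 => ltac:(by rewrite subr_ge0; exact: dE_lb)) 1 t (lexx 1) t1.
have H2 := @mono_deriv2 _ (fun t => beta y * t - E y t) (fun t => beta y - dE y t) 1 ltr01
  (fun u u0 => dB (dlin u (beta y)) (E_der y u u0))
  (fun u u1 => ltac:(by rewrite subr_ge0; exact: dE_ub)) 1 t (lexx 1) t1.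
simpl in H1, H2; rewrite mulr1 in H1 H2.
have ha1 := alpha_gt0; have hb := beta_ge0 y.
have hE1 : 0 < E y 1 by exact: expR_gt0.
set c1 := Num.min alpha (E y 1).
have c1a : c1 <= alpha by rewrite ge_min lexx.
have c1E : c1 <= E y 1 by rewrite ge_min lexx orbT.
have c10 : 0 < c1 by rewrite lt_min ha1 hE1.
have L : c1 * t <= E y t by nra.
have U : E y t <= (E y 1 + beta y) * t by nra.
have Et : ln (E y t) = z f t - z y t by rewrite /E expRK.
have c20 : 0 < E y 1 + beta y by exact: ltr_wpDr.
have lL : ln c1 + ln t <= z f t - z y t.
  by rewrite -Et -lnM ?posrE // ?mulr_gt0 // ler_ln ?posrE ?mulr_gt0 // expR_gt0.
have lU : z f t - z y t <= ln (E y 1 + beta y) + ln t.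
  by rewrite -Et -lnM ?posrE // ler_ln ?posrE ?mulr_gt0 // expR_gt0.
have n1 := ler_norm (- ln c1); rewrite normrN in n1.
have n2 := ler_norm (ln (E y 1 + beta y)).
have n3 := normr_ge0 (ln c1); have n4 := normr_ge0 (ln (E y 1 + beta y)).
rewrite /Bg -/c1 ler_norml; apply/andP; split; lra.
Qed.

Definition Bg' (y : 'I_M) := if y == f then 0 else Bg y.
Definition BS := \sum_(y < M) Bg' y.
Definition Cz := `|K| + 2 * BS.

Lemma Bg'_ge0 y : 0 <= Bg' y.
Proof. by rewrite /Bg'; case: ifP => // _; apply: addr_ge0. Qed.

Lemma Bg'_le y : Bg' y <= BS.
Proof.
rewrite /BS (bigD1 y) //= lerDl; apply: sumr_ge0 => k _; exact: Bg'_ge0.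
Qed.

Lemma core_bound (t : R) : 1 <= t -> forall y,
  `|z y t - ((y == f)%:R - M%:R^-1) * ln t| <= Cz.
Proof.
move=> t1 y.
have t0 : 0 < t by exact: lt_le_trans ltr01 t1.
have M0 : M%:R != 0 :> R by rewrite pnatr_eq0 -lt0n (leq_ltn_trans (leq0n f) (ltn_ord f)).
have M1 : 1 <= M%:R :> R by rewrite ler1n (leq_ltn_trans (leq0n f) (ltn_ord f)).
pose eps k := (z f t - z k t) - (1 - (k == f)%:R) * ln t.
have he : forall k, `|eps k| <= Bg' k.
  move=> k; rewrite /eps /Bg'; case: eqP => [->|/eqP hk].
    by rewrite subrr /= mulr1n subrr mul0r subr0 normr0.
  by rewrite /= mulr0n subr0 mul1r; exact: g_bound.
have hsum : \sum_(k < M) eps k = M%:R * z f t - K - (M%:R - 1) * ln t.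
  rewrite /eps sumrB sumrB -(@sumz_cst t t0) sumr_const card_ord mulr_natl; congr (_ - _).
  rewrite -mulr_suml sumrB sumr_const card_ord.
  have -> : \sum_(i < M) (i == f)%:R = 1 :> R.
    by rewrite -[RHS](sum_delta (fun _ => 1)); apply: eq_bigr => i _; rewrite mulr1.
  by [].
have key : z y t - ((y == f)%:R - M%:R^-1) * ln t = (K + \sum_(k < M) eps k) / M%:R - eps y.
  by rewrite hsum /eps; field.
rewrite key.
apply: (le_trans (ler_normB _ _)).
have -> : Cz = (`|K| + BS) + BS by rewrite /Cz; ring.
rewrite lerD //; last exact: le_trans (he y) (Bg'_le y).
rewrite normrM normfV (ger0_norm (ler0n _ _)).
apply: (@le_trans _ _ `|K + \sum_(k < M) eps k|).
  rewrite ler_pdivrMr ?(lt_le_trans ltr01) //.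
  by rewrite ler_peMr.
apply: (le_trans (ler_normD _ _)); rewrite lerD2l.
apply: (le_trans (ler_norm_sum _ _ _)); apply: ler_sum => k _; exact: he.
Qed.

End Core.

Section Frob.
Context {R : realType} {d : nat}.

Lemma dotvD (v w1 w2 : 'cV[R]_d) : dotv v (w1 + w2) = dotv v w1 + dotv v w2.
Proof. by rewrite /dotv -big_split; apply: eq_bigr => k _; rewrite mxE mulrDr. Qed.

Lemma dotvZ (v w : 'cV[R]_d) c : dotv v (c *: w) = c * dotv v w.
Proof. by rewrite /dotv mulr_sumr; apply: eq_bigr => k _; rewrite mxE mulrCA. Qed.

Lemma frobD (A B V : 'M[R]_d) : frob (A + B) V = frob A V + frob B V.
Proof.
rewrite /frob -big_split; apply: eq_bigr => i _.
by rewrite -big_split; apply: eq_bigr => j _; rewrite mxE mulrDl.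
Qed.

Lemma frobZ (A V : 'M[R]_d) c : frob (c *: A) V = c * frob A V.
Proof.
rewrite /frob mulr_sumr; apply: eq_bigr => i _.
by rewrite mulr_sumr; apply: eq_bigr => j _; rewrite mxE mulrA.
Qed.

Lemma frobN (A V : 'M[R]_d) : frob (- A) V = - frob A V.
Proof. by rewrite -scaleN1r frobZ mulN1r. Qed.

Lemma frob_sum n (F : 'I_n -> 'M[R]_d) V :
  frob (\sum_(k < n) F k) V = \sum_(k < n) frob (F k) V.
Proof.
elim: n F => [|n IH] F; first by rewrite !big_ord0 /frob big1 // => i _; rewrite big1 // => j _; rewrite mxE mul0r.
by rewrite !big_ord_recr /= frobD IH.
Qed.

Lemma frob_tensor (A : 'M[R]_d) (u e : 'cV[R]_d) : frob (tensor u e) A = dotv u (A *m e).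
Proof.
rewrite /frob /dotv; apply: eq_bigr => i _.
rewrite mxE mulr_sumr; apply: eq_bigr => j _.
rewrite !mxE big_ord1 !mxE; ring.
Qed.

Lemma frob_delta (A : 'M[R]_d) i j : frob A (delta_mx i j) = A i j.
Proof.
rewrite /frob (bigD1 i) //= (bigD1 j) //= !mxE !eqxx /= mulr1.
rewrite big1 ?addr0; last by move=> k /negbTE hk; rewrite mxE hk andbF mulr0.
rewrite big1 ?addr0 // => k /negbTE hk; rewrite big1 // => l _.
by rewrite mxE hk mulr0.
Qed.

Lemma frob_inj (A B : 'M[R]_d) : (forall V, frob A V = frob B V) -> A = B.
Proof.
move=> H; apply/matrixP => i j; by rewrite -!frob_delta H.
Qed.

End Frob.

Section Transfer.
Context {R : realType} {V W : normedModType R}.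

Lemma is_derive_dir (F : V -> W) (a v : V) (D : W) :
  is_derive (0 : R) 1 (fun h : R => F (h *: v + a)) D -> is_derive a v F D.
Proof.
move=> [hd hv].
have E : (fun h : R => h^-1 *: ((F \o shift a) (h *: v) - F a)) =
  (fun h : R => h^-1 *: (((fun h : R => F (h *: v + a)) \o shift 0) (h *: 1) - F (0 *: v + a))).
  by apply: funext => h /=; rewrite addr0 scale0r add0r [_%:A]mulr1.
apply: DeriveDef.
  by rewrite /derivable E.
by rewrite /derive E.
Qed.

End Transfer.

Section Grad.
Context {R : realType} {N M d : nat} (e : 'I_N -> 'cV[R]_d) (u : 'I_M -> 'cV[R]_d)
  (fstar : 'I_N -> 'I_M) (p : 'I_N -> R).

Definition lg (W : 'M[R]_d) (y : 'I_M) (x : 'I_N) := dotv (u y) (W *m e x).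

Definition Gs (W : 'M[R]_d) : 'M[R]_d := - \sum_(x < N) \sum_(y < M)
  (p x * ((y == fstar x)%:R - pW e u W y x)) *: tensor (u y) (e x).

Lemma lg_lin (h : R) (V W : 'M[R]_d) (y : 'I_M) (x : 'I_N) : lg (h *: V + W) y x = lg W y x + h * lg V y x.
Proof. by rewrite /lg mulmxDl -scalemxAl dotvD dotvZ addrC. Qed.

Lemma sumexp_gt0 (x : 'I_N) (F : 'I_M -> R) : 0 < \sum_(z < M) expR (F z).
Proof.
rewrite (bigD1 (fstar x)) //=; apply: (lt_le_trans (expR_gt0 (F (fstar x)))).
rewrite lerDl; apply: sumr_ge0 => k _; exact: expR_ge0.
Qed.

Lemma loss_dir (W V : 'M[R]_d) : is_derive W V (loss e u fstar p) (frob (Gs W) V).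
Proof.
apply: is_derive_dir.
have -> : (fun h : R => loss e u fstar p (h *: V + W)) = (fun h : R => - \sum_(x < N) p x *
    ((lg W (fstar x) x + h * lg V (fstar x) x) -
      ln (\sum_(z < M) expR (lg W z x + h * lg V z x)))).
  apply: funext => h; rewrite /loss; congr (- _); apply: eq_bigr => x _; congr (_ * _).
  rewrite /pW ln_div ?posrE ?expR_gt0 //; last first.
    have := sumexp_gt0 x (fun z => lg (h *: V + W) z x); by [].
  rewrite expRK; congr (_ - ln _); first exact: lg_lin.
  by apply: eq_bigr => z _; rewrite -lg_lin.
eapply deq.
  apply: dN; apply: dsum => x; apply: dMc; apply: dB.
  apply: dln; first exact: sumexp_gt0 x _.
  apply: dsum => z; apply: dexp; apply: dD; try exact: dC; try exact: dlinr.
rewrite /Gs frobN frob_sum; congr (- _); apply: eq_bigr => x _.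
rewrite frob_sum; symmetry.
have hA : forall c : R, c%:A = c := fun c => mulr1 c.
under eq_bigr do rewrite frobZ frob_tensor -/(lg V _ x) -mulrA.
rewrite !hA scale0r !add0r !mul1r -mulr_sumr; congr (_ * _).
have E1 : \sum_(z < M) expR (lg W z x + 0 * lg V z x) = \sum_(z < M) expR (lg W z x).
  by apply: eq_bigr => z _; rewrite mul0r addr0.
rewrite E1.
set T := (X in _ = _ - _ * X).
have -> : T = \sum_(i < M) expR (lg W i x) * lg V i x.
  by apply: eq_bigr => i _; rewrite mul0r addr0 add0r mul1r [_%:A]mulr1.
under eq_bigr do rewrite mulrBl.
rewrite sumrB; congr (_ - _).
  rewrite (bigD1 (fstar x)) //= eqxx mul1r big1 ?addr0 // => y /negbTE ->; exact: mul0r.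
rewrite mulr_sumr; apply: eq_bigr => z _.
by rewrite /pW /lg mulrA [_^-1 * _]mulrC.
Qed.

Lemma grad_eq (W G : 'M[R]_d) : is_gradient (loss e u fstar p) W G -> G = Gs W.
Proof.
move=> [hdiff hG]; apply: frob_inj => V.
rewrite -hG -deriveE //.
by have [_ ->] := loss_dir W V.
Qed.

End Grad.

Section Dot.
Context {R : realType} {d : nat}.
Implicit Types v w : 'cV[R]_d.

Lemma dotvC v w : dotv v w = dotv w v.
Proof. by apply: eq_bigr => k _; rewrite mulrC. Qed.

Lemma dotvDl v1 v2 w : dotv (v1 + v2) w = dotv v1 w + dotv v2 w.
Proof. by rewrite !(dotvC _ w) dotvD. Qed.

Lemma dotvZl c v w : dotv (c *: v) w = c * dotv v w.
Proof. by rewrite !(dotvC _ w) dotvZ. Qed.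

Lemma dotvN v w : dotv v (- w) = - dotv v w.
Proof. by rewrite -scaleN1r dotvZ mulN1r. Qed.

Lemma dotvB v w1 w2 : dotv v (w1 - w2) = dotv v w1 - dotv v w2.
Proof. by rewrite dotvD dotvN. Qed.

Lemma dotvBl v1 v2 w : dotv (v1 - v2) w = dotv v1 w - dotv v2 w.
Proof. by rewrite !(dotvC _ w) dotvB. Qed.

Lemma dotv_sum n (F : 'I_n -> 'cV[R]_d) v :
  dotv v (\sum_(k < n) F k) = \sum_(k < n) dotv v (F k).
Proof.
elim: n F => [|n IH] F.
  by rewrite !big_ord0 /dotv big1 // => k _; rewrite mxE mulr0.
by rewrite !big_ord_recr /= dotvD IH.
Qed.

Lemma dotv_suml n (F : 'I_n -> 'cV[R]_d) v :
  dotv (\sum_(k < n) F k) v = \sum_(k < n) dotv (F k) v.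
Proof. by rewrite dotvC dotv_sum; apply: eq_bigr => k _; rewrite dotvC. Qed.

Lemma dotv_self0 v : dotv v v = 0 -> v = 0.
Proof.
move=> h; apply/matrixP => i j; rewrite (ord1 j) mxE.
have /psumr_eq0P H : \sum_(k < d) v k 0 * v k 0 = 0 by [].
have := H (fun k _ => ltac:(by rewrite -expr2 sqr_ge0)) i isT.
by rewrite -expr2 => /eqP; rewrite sqrf_eq0 => /eqP.
Qed.

Lemma tensor_mul (u e w : 'cV[R]_d) : tensor u e *m w = dotv e w *: u.
Proof.
apply/matrixP => i j; rewrite (ord1 j) !mxE /dotv mulr_suml.
apply: eq_bigr => k _; rewrite !mxE big_ord1 !mxE; ring.
Qed.

Lemma tensorDl (u1 u2 e : 'cV[R]_d) : tensor (u1 + u2) e = tensor u1 e + tensor u2 e.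
Proof. by rewrite /tensor mulmxDl. Qed.

Lemma tensorZl c (u e : 'cV[R]_d) : tensor (c *: u) e = c *: tensor u e.
Proof. by rewrite /tensor scalemxAl. Qed.

Lemma tensor_suml n (F : 'I_n -> 'cV[R]_d) e :
  tensor (\sum_(k < n) F k) e = \sum_(k < n) tensor (F k) e.
Proof. by rewrite /tensor mulmx_suml. Qed.

End Dot.

Lemma zid2 (V : zmodType) (x y z : V) : x - y = (z - y) - (z - x).
Proof. by rewrite [in RHS]opprB [in RHS]addrC [in RHS]addrA [in RHS]subrK. Qed.

Section Proj.
Context {R : realType} {M d : nat} (u : 'I_M -> 'cV[R]_d).
Hypothesis hu : orthonormal_vecs u.

Lemma Pi_u (Pi : 'cV[R]_d -> 'cV[R]_d) y0 : is_orth_proj_diff_span u Pi ->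
  Pi (u y0) = u y0 - M%:R^-1 *: \sum_(y < M) u y.
Proof.
move=> hPi.
have M0 : M%:R != 0 :> R by rewrite pnatr_eq0 -lt0n (leq_ltn_trans (leq0n y0) (ltn_ord y0)).
set w := u y0 - _.
have hw : in_diff_span u w.
  exists (fun i j => if i == y0 then M%:R^-1 else 0).
  rewrite (bigD1 y0) //= [X in _ + X]big1 ?addr0; last first.
    by move=> i /negbTE hi; apply: big1 => j _; rewrite hi scale0r.
  rewrite eqxx -scaler_sumr sumrB sumr_const card_ord /w scalerBr.
  by rewrite -[u y0 *+ M]scaler_nat scalerA mulVf // scale1r.
have hsum : forall i, dotv (\sum_(y < M) u y) (u i) = 1.
  move=> i; rewrite dotv_suml (bigD1 i) //= hu eqxx big1 ?addr0 // => k /negbTE hk.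
  by rewrite hu hk.
have horth : forall v, in_diff_span u v -> dotv (u y0 - w) v = 0.
  move=> v [c ->]; rewrite /w opprB addrC subrK dotvZl dotv_sum big1 ?mulr0 //.
  move=> i _; rewrite dotv_sum big1 // => j _.
  by rewrite dotvZ dotvB !hsum subrr mulr0.
have [[c1 hc1] hP] := hPi (u y0).
have [c2 hc2] := hw.
have hd : in_diff_span u (Pi (u y0) - w).
  exists (fun i j => c1 i j - c2 i j).
  rewrite hc1 hc2 -sumrB; apply: eq_bigr => i _; rewrite -sumrB.
  by apply: eq_bigr => j _; rewrite scalerBl.
have e1 := hP _ hd; have e2 := horth _ hd.
have : dotv (Pi (u y0) - w) (Pi (u y0) - w) = 0.
  rewrite [X in dotv X _](@zid2 _ (Pi (u y0)) w (u y0)).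
  rewrite {1}dotvBl.
  by rewrite e1 e2 subrr.
by move/dotv_self0/eqP; rewrite subr_eq0 => /eqP.
Qed.

End Proj.

Section Lim.
Context {R : realType} {V : normedModType R}.

Lemma lim_log (X : R -> V) (L : V) (C : R) :
  (forall t : R, 1 <= t -> `|X t - ln t *: L| <= C) ->
  (ln t)^-1 *: X t @[t --> +oo] --> L.
Proof.
move=> HC; apply/cvgrPdist_lt => eps eps0.
have hr : expR ((`|C| + 1) / eps) \is Num.real by rewrite num_real.
near=> t.
have ht : expR ((`|C| + 1) / eps) < t by near: t; exact: nbhs_pinfty_gt.
have c1 : 0 < `|C| + 1 by have := normr_ge0 C; lra.
have cp : 0 < (`|C| + 1) / eps by apply: divr_gt0.
have h1 : 1 < t.
  by apply: le_lt_trans ht; rewrite -[leLHS]expR0 ler_expR ltW.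
have t0 : 0 < t by exact: lt_trans ltr01 h1.
have lt : (`|C| + 1) / eps < ln t.
  by rewrite -[X in X < _]expRK ltr_ln ?posrE ?expR_gt0.
have l0 : 0 < ln t by apply: lt_trans lt.
have -> : L - (ln t)^-1 *: X t = (ln t)^-1 *: (ln t *: L - X t).
  by rewrite scalerBr scalerA mulVf ?gt_eqF // scale1r.
rewrite normrZ normrV ?unitfE ?gt_eqF // gtr0_norm // -normrN opprB.
rewrite ltr_pdivrMl //.
apply: (le_lt_trans (HC t (ltW h1))).
apply: (le_lt_trans (ler_norm C)).
rewrite ltr_pdivrMr // in lt.
lra.
Unshelve. all: end_near.
Qed.

End Lim.

Section Flow.
Context {R : realType} {d : nat}.

Lemma entry_der (W : R -> 'M[R]_d) (t : R) (D : 'M[R]_d) i j :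
  is_derive t 1 W D -> is_derive t 1 (fun s => W s i j) (D i j).
Proof.
move=> [hd hv]; apply: DeriveDef.
  by move/derivable_mxP: hd; apply.
by have h := derive_mx hd; rewrite hv in h; rewrite h mxE.
Qed.

Lemma frob_der (W : R -> 'M[R]_d) (t : R) (D c : 'M[R]_d) :
  is_derive t 1 W D -> is_derive t 1 (fun s => frob c (W s)) (frob c D).
Proof.
move=> h; rewrite /frob; apply: dsum => i; apply: dsum => j; apply: dMc; exact: entry_der.
Qed.

End Flow.

Section LG.
Context {R : realType} {N M d : nat} (e : 'I_N -> 'cV[R]_d) (u : 'I_M -> 'cV[R]_d)
  (fstar : 'I_N -> 'I_M) (p : 'I_N -> R).
Hypothesis he : orthonormal_vecs e.
Hypothesis hu : orthonormal_vecs u.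

Lemma lgD A B y x : lg e u (A + B) y x = lg e u A y x + lg e u B y x.
Proof. by rewrite /lg mulmxDl dotvD. Qed.

Lemma lgZ c A y x : lg e u (c *: A) y x = c * lg e u A y x.
Proof. by rewrite /lg -scalemxAl dotvZ. Qed.

Lemma lgN A y x : lg e u (- A) y x = - lg e u A y x.
Proof. by rewrite -scaleN1r lgZ mulN1r. Qed.

Lemma lg_sum n (F : 'I_n -> 'M[R]_d) y x :
  lg e u (\sum_(k < n) F k) y x = \sum_(k < n) lg e u (F k) y x.
Proof.
elim: n F => [|n IH] F.
  by rewrite !big_ord0 /lg mul0mx /dotv big1 // => k _; rewrite mxE mulr0.
by rewrite !big_ord_recr /= lgD IH.
Qed.

Lemma lg_tensor y' x' y x :
  lg e u (tensor (u y') (e x')) y x = (x' == x)%:R * (y == y')%:R.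
Proof. by rewrite /lg tensor_mul dotvZ he hu. Qed.

Definition cf (W : 'M[R]_d) (x : 'I_N) (y : 'I_M) :=
  p x * ((y == fstar x)%:R - pW e u W y x).

Lemma mGsE W : - Gs e u fstar p W = \sum_(x < N) \sum_(y < M) cf W x y *: tensor (u y) (e x).
Proof. by rewrite /Gs opprK. Qed.

Lemma lg_mGs W y x : lg e u (- Gs e u fstar p W) y x = cf W x y.
Proof.
rewrite mGsE lg_sum (bigD1 x) //= [X in _ + X]big1 ?addr0; last first.
  move=> x' /negbTE hx; rewrite lg_sum big1 // => y' _.
  by rewrite lgZ lg_tensor hx mul0r mulr0.
rewrite lg_sum (bigD1 y) //= [X in _ + X]big1 ?addr0; last first.
  move=> y' hy; rewrite lgZ lg_tensor eq_sym (negbTE hy) mulr0 mulr0 //.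
rewrite lgZ lg_tensor !eqxx /= ?mulr1n ?mulr1; reflexivity.
Qed.

Lemma mGs_decomp W : - Gs e u fstar p W =
  \sum_(x < N) \sum_(y < M) lg e u (- Gs e u fstar p W) y x *: tensor (u y) (e x).
Proof.
rewrite {1}mGsE; apply: eq_bigr => x _; apply: eq_bigr => y _; by rewrite lg_mGs.
Qed.

End LG.

Theorem theorem3 (R : realType) (N M d : nat)
  (hN : (2 <= N)%N) (hM : (2 <= M)%N) (hd : (maxn N M <= d)%N)
  (e : 'I_N -> 'cV[R]_d) (u : 'I_M -> 'cV[R]_d)
  (fstar : 'I_N -> 'I_M) (p : 'I_N -> R)
  (hp_sum : \sum_(x < N) p x = 1)
  (he : orthonormal_vecs e) (hu : orthonormal_vecs u)
  (hp_pos : forall x, 0 < p x)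
  (Pi : 'cV[R]_d -> 'cV[R]_d) (hPi : is_orth_proj_diff_span u Pi)
  (W0 : 'M[R]_d) (W : R -> 'M[R]_d)
  (hW : is_gradient_flow (loss e u fstar p) W0 W) :
  exists kappa : R, 0 < kappa /\
    ((ln t)^-1 *: W t @[t --> +oo] -->
       kappa *: \sum_(x < N) tensor (Pi (u (fstar x))) (e x)).
Proof.
have [_ [_ hWd]] := hW.
pose T (y : 'I_M) (x : 'I_N) := tensor (u y) (e x).
have hder : forall t : R, 0 < t -> is_derive t 1 W (- Gs e u fstar p (W t)).
  move=> t t0; have [G [hG hdG]] := hWd t t0.
  by rewrite -(@grad_eq _ _ _ _ e u fstar p (W t) G hG).
have lgF : forall A y x, lg e u A y x = frob (T y x) A.
  by move=> A y x; rewrite /T frob_tensor.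
have hlg : forall y x (t : R), 0 < t ->
    is_derive t 1 (fun s => lg e u (W s) y x) (lg e u (- Gs e u fstar p (W t)) y x).
  move=> y x t t0.
  have -> : (fun s => lg e u (W s) y x) = (fun s => frob (T y x) (W s)).
    by apply: funext => s; rewrite lgF.
  rewrite lgF; exact: frob_der (hder t t0).
have hz : forall x (t : R), 0 < t -> forall y,
    is_derive t 1 ((fun y s => lg e u (W s) y x) y)
      (p x * ((y == fstar x)%:R - expR ((fun y s => lg e u (W s) y x) y t) /
         \sum_(k < M) expR ((fun y s => lg e u (W s) y x) k t))).
  move=> x t t0 y; have := hlg y x t t0.
  by rewrite (lg_mGs e u fstar p he hu).
pose Cx x := Cz R M (p x) (fstar x) (fun y s => lg e u (W s) y x).
have hcore : forall x (t : R), 1 <= t -> forall y,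
    `|lg e u (W t) y x - ((y == fstar x)%:R - M%:R^-1) * ln t| <= Cx x.
  move=> x t t1 y; exact: (@core_bound R M (p x) (fstar x) (fun y s => lg e u (W s) y x)
    (hp_pos x) (hz x) t t1 y).
pose Rm (t : R) := W t - \sum_(x < N) \sum_(y < M) lg e u (W t) y x *: T y x.
have hRm : forall t : R, 0 < t -> Rm t = Rm 1.
  move=> t t0; apply/matrixP => i j.
  pose h (s : R) := W s i j - \sum_(x < N) \sum_(y < M) T y x i j * frob (T y x) (W s).
  have hE : forall s, Rm s i j = h s.
    move=> s; rewrite /Rm /h !mxE summxE; congr (_ - _); apply: eq_bigr => x _.
    rewrite summxE; apply: eq_bigr => y _; by rewrite mxE lgF mulrC.
  rewrite !hE; apply: (@cst_deriv _ h) => // s s0.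
  apply: deq.
    apply: dB; first exact: entry_der (hder s s0).
    apply: dsum => x; apply: dsum => y; apply: dMc; exact: frob_der (hder s s0).
  set D := - Gs e u fstar p (W s).
  have -> : D i j = (\sum_(x < N) \sum_(y < M) lg e u D y x *: T y x) i j.
    by rewrite /D -(mGs_decomp e u fstar p he hu).
  apply/eqP; rewrite summxE subr_eq0; apply/eqP; apply: eq_bigr => x _.
  rewrite summxE; apply: eq_bigr => y _; by rewrite mxE lgF mulrC.
exists 1; split; first exact: ltr01.
apply: (@lim_log _ _ W _ (\sum_(x < N) \sum_(y < M) Cx x * `|T y x| + `|Rm 1|)).
move=> t t1.
have t0 : 0 < t by exact: lt_le_trans ltr01 t1.
have hL : 1 *: \sum_(x < N) tensor (Pi (u (fstar x))) (e x) =
    \sum_(x < N) \sum_(y < M) ((y == fstar x)%:R - M%:R^-1) *: T y x.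
  rewrite scale1r; apply: eq_bigr => x _.
  rewrite (@Pi_u _ _ _ u hu Pi (fstar x) hPi) /tensor mulmxBl -scalemxAl mulmx_suml.
  under [in RHS]eq_bigr do rewrite scalerBl.
  rewrite sumrB -scaler_sumr; congr (_ - _).
  rewrite (bigD1 (fstar x)) //= eqxx scale1r [X in _ + X]big1 ?addr0 //.
  by move=> y /negbTE ->; rewrite scale0r.
have hWt : W t = \sum_(x < N) \sum_(y < M) lg e u (W t) y x *: T y x + Rm 1.
  by rewrite -(hRm t t0) /Rm addrC subrK.
rewrite hL hWt scaler_sumr addrAC -sumrB.
apply: (le_trans (ler_normD _ _)); rewrite lerD2r.
apply: (le_trans (ler_norm_sum _ _ _)); apply: ler_sum => x _.
rewrite scaler_sumr -sumrB.
apply: (le_trans (ler_norm_sum _ _ _)); apply: ler_sum => y _.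
rewrite scalerA -scalerBl normrZ ler_wpM2r //.
by rewrite mulrC; exact: hcore.
Qed.
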